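(* For $n\in\mathbb{Z}$ let $f^{(n)}(x)=x^{2^n}$ on $[0,1]$ and $u^{(n)}=2^{-2^n}$, so that $]0,1[=\bigcup_{n\in\mathbb{Z}}\,]u^{(n+1)},u^{(n)}]$ (disjoint union). Define $U_1:[0,1]^2\to[0,1]$ by $U_1(x,y)=1$ if $\max(x,y)=1$; $U_1(x,y)=0$ if $\min(x,y)=0$ and $\max(x,y)<1$; and $$U_1(x,y)=f^{(n+m)}\big(\min(f^{(-n)}(x),f^{(-m)}(y))\big)\quad\text{if }x\in\,]u^{(n+1)},u^{(n)}],\ y\in\,]u^{(m+1)},u^{(m)}],\ n,m\in\mathbb{Z}.$$ Then: (a) $U_1$ is a disjunctive uninorm with neutral element $1/2$; (b) for each $n\in\mathbb{Z}$, $U_1(u^{(n)},y)=f^{(n)}(y)$ for all $y\in[0,1]$, so each such cut is continuous, strictly increasing with range $[0,1]$; (c) $U_1$ does not have continuous underlying functions; (d) with $N_1(0)=1$, $N_1(1)=0$, $N_1(x)=2^{-2^{-\log_2(-\log_2 x)}}$ for $x\in\,]0,1[$, and $N_2(x)=(N_1(x))^2$, both $N_1,N_2$ are continuous strictly decreasing fuzzy negations; the function $U_2(x,y)=U_1(2^{-1/2},U_1(x,y))$ is a disjunctive uninorm with neutral element $1/4$; and $U_2(N_2(x),y)=U_1(N_1(x),y)$ for all $x,y\in[0,1]$.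
   Context: A fuzzy negation is a non-increasing map $N:[0,1]\to[0,1]$ with $N(0)=1$, $N(1)=0$. A uninorm is a map $U:[0,1]^2\to[0,1]$ that is commutative, associative, non-decreasing in each variable, and has a neutral element $e\in[0,1]$; it is disjunctive if $U(1,0)=1$. For a uninorm with neutral element $e\in\,]0,1[$, the underlying t-norm is $T_U(x,y)=U(ex,ey)/e$ and the underlying t-conorm is $S_U(x,y)=(U(e+(1-e)x,e+(1-e)y)-e)/(1-e)$; $U$ has continuous underlying functions if both are continuous. *)

(* Defs.v *)
From Stdlib Require Import Reals Lra ClassicalEpsilon.
Open Scope R_scope.

Definition I01 (x : R) : Prop := 0 <= x <= 1.

(* f^(n)(x) = x^(2^n) on [0,1]; x^(positive real) at 0 is 0. *)
Definition fpow (n : Z) (x : R) : R :=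
  if Req_EM_T x 0 then 0 else Rpower x (powerRZ 2 n).

Definition u (n : Z) : R := Rpower 2 (- powerRZ 2 n).

Definition idx (x : R) : Z :=
  epsilon (inhabits 0%Z) (fun n : Z => u (n + 1) < x <= u n).

Definition U1 (x y : R) : R :=
  if Req_EM_T (Rmax x y) 1 then 1
  else if Req_EM_T (Rmin x y) 0 then 0
  else let n := idx x in let m := idx y in
       fpow (n + m) (Rmin (fpow (- n) x) (fpow (- m) y)).

Definition is_uninorm (U : R -> R -> R) (e : R) : Prop :=
  I01 e /\
  (forall x y, I01 x -> I01 y -> I01 (U x y)) /\
  (forall x y, I01 x -> I01 y -> U x y = U y x) /\
  (forall x y z, I01 x -> I01 y -> I01 z -> U x (U y z) = U (U x y) z) /\
  (forall x x' y y', I01 x -> I01 x' -> I01 y -> I01 y' ->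
      x <= x' -> y <= y' -> U x y <= U x' y') /\
  (forall x, I01 x -> U e x = x /\ U x e = x).

Definition disjunctive (U : R -> R -> R) : Prop := U 1 0 = 1.

Definition fuzzy_negation (N : R -> R) : Prop :=
  (forall x, I01 x -> I01 (N x)) /\
  (forall x y, I01 x -> I01 y -> x <= y -> N y <= N x) /\
  N 0 = 1 /\ N 1 = 0.

Definition strictly_decreasing01 (N : R -> R) : Prop :=
  forall x y, I01 x -> I01 y -> x < y -> N y < N x.

Definition strictly_increasing01 (g : R -> R) : Prop :=
  forall x y, I01 x -> I01 y -> x < y -> g x < g y.

Definition continuous01 (g : R -> R) : Prop :=
  forall x, I01 x -> forall eps, 0 < eps -> exists delta, 0 < delta /\
    forall y, I01 y -> Rabs (y - x) < delta -> Rabs (g y - g x) < eps.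

Definition continuous01_2 (F : R -> R -> R) : Prop :=
  forall x y, I01 x -> I01 y -> forall eps, 0 < eps -> exists delta, 0 < delta /\
    forall x' y', I01 x' -> I01 y' -> Rabs (x' - x) < delta -> Rabs (y' - y) < delta ->
      Rabs (F x' y' - F x y) < eps.

Definition underlying_tnorm (U : R -> R -> R) (e : R) (x y : R) : R :=
  U (e * x) (e * y) / e.

Definition underlying_tconorm (U : R -> R -> R) (e : R) (x y : R) : R :=
  (U (e + (1 - e) * x) (e + (1 - e) * y) - e) / (1 - e).

Definition has_continuous_underlying (U : R -> R -> R) (e : R) : Prop :=
  continuous01_2 (underlying_tnorm U e) /\ continuous01_2 (underlying_tconorm U e).

Definition log2 (x : R) : R := ln x / ln 2.

Definition N1 (x : R) : R :=
  if Req_EM_T x 0 then 1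
  else if Req_EM_T x 1 then 0
  else Rpower 2 (- Rpower 2 (- log2 (- log2 x))).

Definition N2 (x : R) : R := (N1 x) ^ 2.

Definition U2 (x y : R) : R := U1 (Rpower 2 (- (1 / 2))) (U1 x y).

(* Main.v *)
Require Import Defs.
From Stdlib Require Import Reals Lra Lia ClassicalEpsilon.
Open Scope R_scope.

Definition psi (t : R) : R := Rpower 2 (- Rpower 2 (- t)).
Definition phi (x : R) : R := - log2 (- log2 x).

Lemma ln2_pos : 0 < ln 2.
Proof. rewrite <- ln_1. apply ln_increasing; lra. Qed.

Lemma psi_pos t : 0 < psi t.
Proof. unfold psi, Rpower. apply exp_pos. Qed.

Lemma psi_lt1 t : psi t < 1.
Proof. unfold psi. unfold Rpower at 1. rewrite <- exp_0. apply exp_increasing.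
  assert (0 < Rpower 2 (-t)) by (unfold Rpower; apply exp_pos).
  pose proof ln2_pos. nra. Qed.

Lemma psi_lt t t' : t < t' -> psi t < psi t'.
Proof. intro H. unfold psi. apply Rpower_lt; try lra.
  assert (Rpower 2 (- t') < Rpower 2 (-t)) by (apply Rpower_lt; lra). lra. Qed.

Lemma psi_le t t' : t <= t' -> psi t <= psi t'.
Proof. intro H. destruct (Req_dec t t'). subst; lra. left; apply psi_lt; lra. Qed.

Lemma phi_psi t : phi (psi t) = t.
Proof. unfold phi, psi, log2. pose proof ln2_pos.
  unfold Rpower at 1. rewrite ln_exp.
  replace (- (- Rpower 2 (- t) * ln 2 / ln 2)) with (Rpower 2 (-t)) by (field; lra).
  unfold Rpower. rewrite ln_exp. field; lra. Qed.

Lemma psi_phi x : 0 < x < 1 -> psi (phi x) = x.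
Proof. intro H. pose proof ln2_pos. unfold phi, psi, log2.
  assert (ln x < 0) by (rewrite <- ln_1; apply ln_increasing; lra).
  assert (0 < - (ln x / ln 2)).
  { assert (0 < - ln x / ln 2) by (apply Rdiv_lt_0_compat; lra).
    replace (- (ln x / ln 2)) with (- ln x / ln 2) by (field; lra). lra. }
  rewrite Ropp_involutive. unfold Rpower at 2.
  replace (ln (- (ln x / ln 2)) / ln 2 * ln 2) with (ln (- (ln x / ln 2))) by (field; lra).
  rewrite exp_ln by lra. unfold Rpower.
  replace (- - (ln x / ln 2) * ln 2) with (ln x) by (field; lra).
  apply exp_ln; lra. Qed.

Lemma phi_lt x y : 0 < x < 1 -> 0 < y < 1 -> x < y -> phi x < phi y.
Proof. intros Hx Hy H. destruct (Rlt_le_dec (phi x) (phi y)) as [h|h]; auto.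
  apply psi_le in h. rewrite !psi_phi in h; lra. Qed.

Lemma phi_le x y : 0 < x < 1 -> 0 < y < 1 -> x <= y -> phi x <= phi y.
Proof. intros Hx Hy H. destruct (Req_dec x y). subst; lra. left; apply phi_lt; lra. Qed.

Lemma phi_inj x y : 0 < x < 1 -> 0 < y < 1 -> phi x = phi y -> x = y.
Proof. intros. rewrite <- (psi_phi x), <- (psi_phi y); auto; congruence. Qed.

Definition J (t : R) : Z := (1 - up (- t))%Z.

Lemma J_spec t : IZR (J t) - 1 < t <= IZR (J t).
Proof. unfold J. rewrite minus_IZR. destruct (archimed (- t)). simpl. lra. Qed.

Lemma J_unique t k : IZR k - 1 < t <= IZR k -> k = J t.
Proof. intros H. pose proof (J_spec t).
  assert (IZR k - IZR (J t) < 1) by lra. assert (IZR (J t) - IZR k < 1) by lra.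
  rewrite <- minus_IZR in *. apply lt_IZR in H1. apply lt_IZR in H2. lia. Qed.

Lemma J_le a b : a <= b -> (J a <= J b)%Z.
Proof. intros. pose proof (J_spec a). pose proof (J_spec b).
  assert (IZR (J a) - IZR (J b) < 1) by lra. rewrite <- minus_IZR in H2.
  apply lt_IZR in H2. lia. Qed.

Lemma J_shift t k : J (t + IZR k) = (J t + k)%Z.
Proof. symmetry. apply J_unique. rewrite plus_IZR. pose proof (J_spec t). lra. Qed.

Lemma J_int k : J (IZR k) = k.
Proof. symmetry; apply J_unique; lra. Qed.

Definition fr t := t - IZR (J t).
Lemma fr_spec t : -1 < fr t <= 0.
Proof. unfold fr. pose proof (J_spec t). lra. Qed.

Definition op a b := Rmin (fr a) (fr b) + IZR (J a + J b).

Lemma J_op a b : J (op a b) = (J a + J b)%Z.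
Proof. unfold op. rewrite J_shift. rewrite <- (J_unique (Rmin (fr a) (fr b)) 0); [lia|].
  pose proof (fr_spec a); pose proof (fr_spec b).
  unfold Rmin; destruct Rle_dec; simpl; lra. Qed.

Lemma fr_op a b : fr (op a b) = Rmin (fr a) (fr b).
Proof. unfold fr at 1. rewrite J_op. unfold op. ring. Qed.

Lemma op_comm a b : op a b = op b a.
Proof. unfold op. rewrite Rmin_comm, Z.add_comm. auto. Qed.

Lemma op_assoc a b c : op a (op b c) = op (op a b) c.
Proof. assert (E: forall x y, op x y = Rmin (fr x) (fr y) + IZR (J x + J y)) by reflexivity.
  rewrite (E a (op b c)), (E (op a b) c), !J_op, !fr_op.
  rewrite Rmin_assoc. f_equal. f_equal. lia. Qed.

Lemma op_int k b : op (IZR k) b = b + IZR k.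
Proof. unfold op. unfold fr. rewrite J_int. rewrite Rminus_diag.
  rewrite Rmin_right. rewrite plus_IZR. ring. pose proof (J_spec b); lra. Qed.

Lemma op_mono a a' b : a <= a' -> op a b <= op a' b.
Proof. intro H. pose proof (J_le _ _ H). destruct (Z.eq_dec (J a) (J a')) as [e|e].
  - unfold op. rewrite e. apply Rplus_le_compat_r.
    assert (fr a <= fr a') by (unfold fr; rewrite e; lra).
    unfold Rmin; repeat destruct Rle_dec; lra.
  - assert (J a + 1 <= J a')%Z by lia. apply IZR_le in H1. rewrite plus_IZR in H1.
    unfold op. rewrite !plus_IZR.
    pose proof (fr_spec a); pose proof (fr_spec a'); pose proof (fr_spec b).
    unfold Rmin; repeat destruct Rle_dec; lra. Qed.

Lemma op_int_lt k b b' : b < b' -> op (IZR k) b < op (IZR k) b'.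
Proof. rewrite !op_int. lra. Qed.

Lemma u_psi n : u n = psi (- IZR n).
Proof. unfold u, psi. rewrite Ropp_involutive, powerRZ_Rpower by lra. auto. Qed.

Lemma u_int n : 0 < u n < 1.
Proof. rewrite u_psi. split; [apply psi_pos|apply psi_lt1]. Qed.

Lemma phi_u n : phi (u n) = - IZR n.
Proof. rewrite u_psi, phi_psi. auto. Qed.

Lemma fpow_psi n t : fpow n (psi t) = psi (t - IZR n).
Proof. unfold fpow. destruct Req_EM_T as [e|e].
  - pose proof (psi_pos t); lra.
  - rewrite powerRZ_Rpower by lra. unfold psi at 1. rewrite Rpower_mult.
    unfold psi. f_equal.
    replace (- (t - IZR n)) with (- t + IZR n) by ring. rewrite Rpower_plus. ring. Qed.

Lemma fpow_0 n : fpow n 0 = 0.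
Proof. unfold fpow. destruct Req_EM_T; lra. Qed.

Lemma fpow_1 n : fpow n 1 = 1.
Proof. unfold fpow. destruct Req_EM_T; try lra. unfold Rpower. rewrite ln_1, Rmult_0_r. apply exp_0. Qed.

Lemma idx_spec_psi t : u (- J t + 1) < psi t <= u (- J t).
Proof. rewrite !u_psi. rewrite plus_IZR, opp_IZR. pose proof (J_spec t).
  split. apply psi_lt; lra. apply psi_le; lra. Qed.

Lemma u_range_iff n x : 0 < x < 1 -> (u (n + 1) < x <= u n <-> n = (- J (phi x))%Z).
Proof. intros Hx. split.
  - intros [h1 h2]. rewrite <- (psi_phi x) in h1, h2 by auto. rewrite !u_psi in h1, h2.
    assert (- IZR (n+1) < phi x).
    { destruct (Rlt_le_dec (- IZR (n+1)) (phi x)); auto. apply psi_le in r. lra. }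
    assert (phi x <= - IZR n).
    { destruct (Rle_lt_dec (phi x) (- IZR n)); auto. apply psi_lt in r. lra. }
    rewrite plus_IZR in H. assert (- n = J (phi x))%Z.
    { apply J_unique. rewrite opp_IZR. lra. } lia.
  - intros ->. pose proof (idx_spec_psi (phi x)). rewrite psi_phi in H by auto. auto. Qed.

Lemma idx_eq x : 0 < x < 1 -> idx x = (- J (phi x))%Z.
Proof. intro Hx. unfold idx. apply (u_range_iff _ x Hx).
  apply epsilon_spec. exists (- J (phi x))%Z. apply u_range_iff; auto. Qed.

Lemma psi_min a b : Rmin (psi a) (psi b) = psi (Rmin a b).
Proof. unfold Rmin. destruct (Rle_dec (psi a) (psi b)), (Rle_dec a b); auto.
  - assert (psi b < psi a) by (apply psi_lt; lra). lra.
  - assert (psi a <= psi b) by (apply psi_le; lra). lra. Qed.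

Lemma U1_int x y : 0 < x < 1 -> 0 < y < 1 -> U1 x y = psi (op (phi x) (phi y)).
Proof. intros Hx Hy. unfold U1.
  destruct Req_EM_T as [e|e]. { unfold Rmax in e; destruct Rle_dec in e; lra. }
  destruct Req_EM_T as [e'|e']. { unfold Rmin in e'; destruct Rle_dec in e'; lra. }
  simpl. rewrite !idx_eq by auto. 
  set (a := phi x). set (b := phi y). rewrite <- (psi_phi x) by auto.
  rewrite <- (psi_phi y) by auto. fold a b.
  rewrite !fpow_psi, psi_min, fpow_psi. f_equal. unfold op, fr. 
  rewrite !Z.opp_involutive, plus_IZR, !opp_IZR, plus_IZR. ring. Qed.


Lemma cases01 x : I01 x -> x = 0 \/ x = 1 \/ 0 < x < 1.
Proof. unfold I01; intros. destruct (Req_dec x 0); auto. destruct (Req_dec x 1); auto. right; right; lra. Qed.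

Lemma U1_1l x : I01 x -> U1 1 x = 1.
Proof. unfold I01, U1; intros. destruct Req_EM_T as [e|e]; auto. exfalso; apply e.
  unfold Rmax; destruct Rle_dec; lra. Qed.

Lemma U1_1r x : I01 x -> U1 x 1 = 1.
Proof. unfold I01, U1; intros. destruct Req_EM_T as [e|e]; auto. exfalso; apply e.
  unfold Rmax; destruct Rle_dec; lra. Qed.

Lemma U1_0 x y : I01 x -> I01 y -> x < 1 -> y < 1 -> (x = 0 \/ y = 0) -> U1 x y = 0.
Proof. unfold I01, U1; intros. destruct Req_EM_T as [e|e].
  { unfold Rmax in e; destruct Rle_dec in e; lra. }
  destruct Req_EM_T as [e'|e']; auto. exfalso; apply e'.
  unfold Rmin; destruct Rle_dec; lra. Qed.

Lemma psi_I01 t : I01 (psi t).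
Proof. pose proof (psi_pos t); pose proof (psi_lt1 t). unfold I01; lra. Qed.

Lemma U1_I01 x y : I01 x -> I01 y -> I01 (U1 x y).
Proof. intros Hx Hy.
  destruct (cases01 x Hx) as [->|[->|ix]].
  - destruct (cases01 y Hy) as [->|[->|iy]].
    + rewrite U1_0; unfold I01; lra.
    + rewrite U1_1r; unfold I01; lra.
    + rewrite U1_0; unfold I01 in *; lra.
  - rewrite U1_1l; unfold I01 in *; lra.
  - destruct (cases01 y Hy) as [->|[->|iy]].
    + rewrite U1_0; unfold I01 in *; lra.
    + rewrite U1_1r; unfold I01; lra.
    + rewrite U1_int by auto. apply psi_I01. Qed.

Lemma U1_lt1 x y : I01 x -> I01 y -> x < 1 -> y < 1 -> U1 x y < 1.
Proof. intros Hx Hy h1 h2.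
  destruct (cases01 x Hx) as [->|[->|ix]]; try lra.
  - rewrite U1_0; auto; lra.
  - destruct (cases01 y Hy) as [->|[->|iy]]; try lra.
    + rewrite U1_0; auto; lra.
    + rewrite U1_int by auto. apply psi_lt1. Qed.

Lemma U1_pos x y : I01 x -> I01 y -> 0 < x -> 0 < y -> 0 < U1 x y.
Proof. intros Hx Hy h1 h2.
  destruct (cases01 x Hx) as [->|[->|ix]]; try lra.
  - rewrite U1_1l; auto; lra.
  - destruct (cases01 y Hy) as [->|[->|iy]]; try lra.
    + rewrite U1_1r; auto; lra.
    + rewrite U1_int by auto. apply psi_pos. Qed.

Lemma U1_int' x y : 0 < x < 1 -> 0 < y < 1 -> 0 < U1 x y < 1.
Proof. intros. rewrite U1_int by auto. split; [apply psi_pos|apply psi_lt1]. Qed.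

Lemma U1_comm x y : I01 x -> I01 y -> U1 x y = U1 y x.
Proof. intros Hx Hy.
  destruct (cases01 x Hx) as [->|[->|ix]];
  destruct (cases01 y Hy) as [->|[->|iy]];
  try (rewrite ?U1_1l, ?U1_1r; auto; unfold I01; lra);
  try (rewrite !U1_0; auto; unfold I01 in *; lra).
  rewrite !U1_int, op_comm; auto. Qed.

Lemma U1_assoc x y z : I01 x -> I01 y -> I01 z -> U1 x (U1 y z) = U1 (U1 x y) z.
Proof. intros Hx Hy Hz.
  destruct (cases01 x Hx) as [ex|[ex|ix]].
  - subst. destruct (Req_dec y 1). subst. rewrite U1_1l, !U1_1r, U1_1l; auto; unfold I01; lra.
    destruct (Req_dec z 1). subst. rewrite !U1_1r; auto. apply U1_I01; auto.
    assert (U1 y z < 1) by (apply U1_lt1; unfold I01 in *; lra).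
    rewrite U1_0; auto; try (apply U1_I01; auto); try (unfold I01 in *; lra).
    rewrite (U1_0 0 y); auto; try (unfold I01 in *; lra). rewrite U1_0; auto; try (unfold I01 in *; lra).
  - subst. rewrite !U1_1l; auto. apply U1_I01; auto.
  - destruct (cases01 y Hy) as [ey|[ey|iy]].
    + subst. rewrite (U1_0 x 0); auto; try lra.
      destruct (Req_dec z 1). { subst. rewrite !U1_1r; auto; unfold I01; lra. }
      rewrite (U1_0 0 z); try (unfold I01 in *; lra). rewrite U1_0; auto; unfold I01 in *; lra.
    + subst. rewrite U1_1l, U1_1r, U1_1l; auto.
    + destruct (cases01 z Hz) as [ez|[ez|iz]].
      * subst. rewrite (U1_0 y 0), (U1_0 x 0), U1_0; auto; try lra; unfold I01 in *; try lra.
        apply U1_I01; auto. apply U1_lt1; auto; lra.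
      * subst. rewrite !U1_1r; auto; try (unfold I01; lra). apply U1_I01; auto.
      * rewrite (U1_int y z), (U1_int x y) by auto.
        rewrite !U1_int; try (split; [apply psi_pos|apply psi_lt1]); auto.
        rewrite !phi_psi, op_assoc; auto. Qed.

Lemma U1_mono x x' y y' : I01 x -> I01 x' -> I01 y -> I01 y' ->
      x <= x' -> y <= y' -> U1 x y <= U1 x' y'.
Proof. intros Hx Hx' Hy Hy' h1 h2.
  pose proof (U1_I01 x y Hx Hy). pose proof (U1_I01 x' y' Hx' Hy').
  destruct (Req_dec x' 1). subst. rewrite U1_1l; auto. unfold I01 in *; lra.
  destruct (Req_dec y' 1). subst. rewrite U1_1r; auto. unfold I01 in *; lra.
  destruct (Req_dec x 0). subst. rewrite U1_0; auto; unfold I01 in *; lra.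
  destruct (Req_dec y 0). subst. rewrite U1_0; auto; unfold I01 in *; lra.
  unfold I01 in *. rewrite !U1_int by lra. apply psi_le.
  apply Rle_trans with (op (phi x') (phi y)).
  apply op_mono, phi_le; lra.
  rewrite !(op_comm (phi x')). apply op_mono, phi_le; lra. Qed.

Lemma half_u0 : 1 / 2 = u 0.
Proof. unfold u. simpl. replace (- 1) with (- (1)) by ring. rewrite Rpower_Ropp, Rpower_1 by lra. lra. Qed.

Lemma U1_neutral x : I01 x -> U1 (u 0) x = x.
Proof. intros Hx. pose proof (u_int 0).
  destruct (cases01 x Hx) as [->|[->|ix]].
  - apply U1_0; unfold I01; lra.
  - apply U1_1r; unfold I01; lra.
  - rewrite U1_int by auto. rewrite phi_u. replace (- IZR 0) with (IZR 0) by (simpl; ring).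
    rewrite op_int. simpl. rewrite Rplus_0_r. apply psi_phi; auto. Qed.

Lemma U1_uninorm : is_uninorm U1 (1/2).
Proof. rewrite half_u0. pose proof (u_int 0). unfold is_uninorm. split. unfold I01; lra.
  split. apply U1_I01. split. apply U1_comm. split. apply U1_assoc. split. apply U1_mono.
  intros x Hx. split. apply U1_neutral; auto. rewrite U1_comm; auto. apply U1_neutral; auto.
  unfold I01; lra. Qed.

Lemma U1_disj : disjunctive U1.
Proof. unfold disjunctive. apply U1_1l. unfold I01; lra. Qed.

Lemma U1_uu n m : U1 (u n) (u m) = u (n + m).
Proof. rewrite U1_int by apply u_int. rewrite !phi_u, <- !opp_IZR, op_int, u_psi.
  rewrite <- plus_IZR, <- opp_IZR. f_equal. f_equal. f_equal. lia. Qed.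

Lemma incr_cont g : (forall x, I01 x -> I01 (g x)) -> strictly_increasing01 g ->
  (forall z, I01 z -> exists y, I01 y /\ g y = z) -> continuous01 g.
Proof. intros Hr Hm Ho x Hx eps He.
  pose proof (Hr x Hx) as Hgx. unfold I01 in Hgx.
  set (lo := Rmax 0 (g x - eps/2)). set (hi := Rmin 1 (g x + eps/2)).
  assert (Hlo : I01 lo) by (unfold lo, I01, Rmax; destruct Rle_dec; lra).
  assert (Hhi : I01 hi) by (unfold hi, I01, Rmin; destruct Rle_dec; lra).
  destruct (Ho lo Hlo) as [p [Hp gp]]. destruct (Ho hi Hhi) as [q [Hq gq]].
  assert (lo <= g x) by (unfold lo, Rmax; destruct Rle_dec; lra).
  assert (g x <= hi) by (unfold hi, Rmin; destruct Rle_dec; lra).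
  assert (px : p <= x). { destruct (Rle_lt_dec p x); auto. pose proof (Hm x p Hx Hp r). lra. }
  assert (qx : x <= q). { destruct (Rle_lt_dec x q); auto. pose proof (Hm q x Hq Hx r). lra. }
  set (d1 := if Req_EM_T p x then 1 else x - p).
  set (d2 := if Req_EM_T q x then 1 else q - x).
  assert (0 < d1). { unfold d1. destruct (Req_EM_T p x) as [e|e]. apply Rlt_0_1. destruct px; [lra|contradiction]. }
  assert (0 < d2). { unfold d2. destruct (Req_EM_T q x) as [e|e]. apply Rlt_0_1. destruct qx; [lra|subst; contradiction]. }
  exists (Rmin d1 d2). split. unfold Rmin; destruct Rle_dec; lra.
  intros y Hy Hyx. assert (Hd1 : Rabs (y - x) < d1) by (unfold Rmin in Hyx; destruct Rle_dec in Hyx; lra).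
  assert (Hd2 : Rabs (y - x) < d2) by (unfold Rmin in Hyx; destruct Rle_dec in Hyx; lra).
  pose proof (Hr y Hy) as Hgy. unfold I01 in Hgy.
  destruct (Rtotal_order y x) as [h|[h|h]].
  - pose proof (Hm y x Hy Hx h).
    rewrite Rabs_left in Hd1 by lra.
    unfold d1 in Hd1. destruct (Req_EM_T p x) as [e|e].
    + exfalso. rewrite e in gp. unfold lo, Rmax in gp; destruct Rle_dec in gp; lra.
    + assert (py : p < y) by lra. pose proof (Hm p y Hp Hy py).
      assert (g x - eps/2 <= lo) by (unfold lo, Rmax; destruct Rle_dec; lra).
      rewrite Rabs_left; lra.
  - subst. rewrite Rminus_diag, Rabs_R0. lra.
  - pose proof (Hm x y Hx Hy h).
    rewrite Rabs_right in Hd2 by lra.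
    unfold d2 in Hd2. destruct (Req_EM_T q x) as [e|e].
    + exfalso. rewrite e in gq. unfold hi, Rmin in gq; destruct Rle_dec in gq; lra.
    + assert (yq : y < q) by lra. pose proof (Hm y q Hy Hq yq).
      assert (hi <= g x + eps/2) by (unfold hi, Rmin; destruct Rle_dec; lra).
      rewrite Rabs_right; lra. Qed.

Lemma decr_cont g : (forall x, I01 x -> I01 (g x)) -> strictly_decreasing01 g ->
  (forall z, I01 z -> exists y, I01 y /\ g y = z) -> continuous01 g.
Proof. intros Hr Hm Ho.
  assert (C : continuous01 (fun y => 1 - g y)).
  { apply incr_cont.
    - intros x Hx. pose proof (Hr x Hx). unfold I01 in *; lra.
    - intros x y Hx Hy h. pose proof (Hm x y Hx Hy h). lra.
    - intros z Hz. destruct (Ho (1 - z)) as [y [Hy e]]. unfold I01 in *; lra.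
      exists y. split; auto. lra. }
  intros x Hx eps He. destruct (C x Hx eps He) as [d [Hd H]]. exists d. split; auto.
  intros y Hy h. specialize (H y Hy h).
  replace (g y - g x) with (- ((1 - g y) - (1 - g x))) by ring. rewrite Rabs_Ropp. auto. Qed.

Lemma cut_eq n y : I01 y -> U1 (u n) y = fpow n y.
Proof. intros Hy. pose proof (u_int n).
  destruct (cases01 y Hy) as [->|[->|iy]].
  - rewrite fpow_0. apply U1_0; unfold I01; lra.
  - rewrite fpow_1. apply U1_1r; unfold I01; lra.
  - rewrite U1_int by auto. rewrite phi_u, <- opp_IZR, op_int.
    rewrite <- (psi_phi y) at 2 by auto. rewrite fpow_psi. f_equal. rewrite opp_IZR. ring. Qed.

Lemma cut_int n y : 0 < y < 1 -> U1 (u n) y = psi (phi y - IZR n).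
Proof. intros. rewrite U1_int by (auto; apply u_int). rewrite phi_u, <- opp_IZR, op_int, opp_IZR.
  f_equal; ring. Qed.

Lemma cut_incr n : strictly_increasing01 (fun y => U1 (u n) y).
Proof. intros y y' Hy Hy' h. simpl. pose proof (u_int n). unfold I01 in *.
  destruct (Req_dec y 0).
  - subst. rewrite U1_0; unfold I01; try lra. apply U1_pos; unfold I01; lra.
  - destruct (Req_dec y' 1).
    + subst. rewrite U1_1r by (unfold I01; lra). apply U1_lt1; unfold I01; lra.
    + rewrite !cut_int by lra. apply psi_lt. pose proof (phi_lt y y'). lra. Qed.


Lemma cut_onto n z : I01 z -> exists y, I01 y /\ U1 (u n) y = z.
Proof. intros Hz. pose proof (u_int n). destruct (cases01 z Hz) as [->|[->|iz]].
  - exists 0. split. unfold I01; lra. apply U1_0; unfold I01; lra.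
  - exists 1. split. unfold I01; lra. apply U1_1r; unfold I01; lra.
  - exists (psi (phi z + IZR n)). split. apply psi_I01.
    rewrite cut_int by (split; [apply psi_pos|apply psi_lt1]). rewrite phi_psi.
    replace (phi z + IZR n - IZR n) with (phi z) by ring. apply psi_phi; auto. Qed.

Lemma partb n :
     (forall y, I01 y -> U1 (u n) y = fpow n y) /\
     continuous01 (fun y => U1 (u n) y) /\
     strictly_increasing01 (fun y => U1 (u n) y) /\
     (forall z, I01 z -> exists y, I01 y /\ U1 (u n) y = z).
Proof. pose proof (u_int n). split. apply cut_eq. split. apply incr_cont.
  intros; apply U1_I01; auto; unfold I01; lra. apply cut_incr. apply cut_onto.
  split. apply cut_incr. apply cut_onto. Qed.

Lemma u1_val : u 1 = 1/4.
Proof. unfold u. simpl. replace (2 * 1) with (INR 2) by (simpl; ring).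
  rewrite Rpower_Ropp, Rpower_pow by lra. simpl. field. Qed.

Lemma u2_val : u 2 = 1/16.
Proof. unfold u. simpl. replace (2 * (2 * 1)) with (INR 4) by (simpl; ring).
  rewrite Rpower_Ropp, Rpower_pow by lra. simpl. field. Qed.

Lemma um1_val : u (-1) = Rpower 2 (- (1 / 2)).
Proof. unfold u. f_equal. simpl. field. Qed.

Lemma U1_diag b : 1/4 < b <= 1/2 -> U1 b b = b.
Proof. intros Hb. assert (ib : 0 < b < 1) by lra.
  rewrite U1_int by auto.
  assert (phi (u 1) < phi b) by (apply phi_lt; auto; try apply u_int; rewrite u1_val; lra).
  assert (phi b <= phi (u 0)) by (apply phi_le; auto; try apply u_int; rewrite <- half_u0; lra).
  rewrite phi_u in H, H0. simpl in H, H0.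
  assert (J (phi b) = 0%Z) by (symmetry; apply J_unique; simpl; lra).
  unfold op, fr. rewrite H1. simpl. rewrite Rmin_left by lra.
  replace (phi b - 0 + 0) with (phi b) by ring. apply psi_phi; auto. Qed.

Lemma partc : ~ has_continuous_underlying U1 (1 / 2).
Proof. intros [T _]. unfold continuous01_2, underlying_tnorm in T.
  destruct (T (1/2) (1/2)) with (eps := 1/4) as [d [Hd H]]; try (unfold I01; lra).
  set (a := 1/2 + Rmin d (1/2) / 2).
  assert (0 < Rmin d (1/2) <= 1/2) by (unfold Rmin; destruct Rle_dec; lra).
  assert (Rmin d (1/2) <= d) by apply Rmin_l.
  assert (Ha : I01 a) by (unfold a, I01; lra).
  assert (Rabs (a - 1/2) < d) by (unfold a; rewrite Rabs_right; lra).
  specialize (H a a Ha Ha H2 H2).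
  rewrite U1_diag in H by (unfold a; lra).
  replace (1/2 * (1/2)) with (u 1) in H by (rewrite u1_val; field).
  rewrite U1_uu in H. simpl in H. rewrite u2_val in H.
  rewrite Rabs_right in H. unfold a in H. lra.
  unfold a. apply Rle_ge. unfold Rdiv. lra. Qed.

Lemma N1_int x : 0 < x < 1 -> N1 x = psi (- phi x).
Proof. intros. unfold N1. destruct Req_EM_T; try lra. destruct Req_EM_T; try lra.
  unfold psi, phi. rewrite Ropp_involutive. auto. Qed.

Lemma N1_0 : N1 0 = 1.
Proof. unfold N1. destruct Req_EM_T; lra. Qed.
Lemma N1_1 : N1 1 = 0.
Proof. unfold N1. destruct Req_EM_T; try lra. destruct Req_EM_T; lra. Qed.

Lemma N1_I01 x : I01 x -> I01 (N1 x).
Proof. intros Hx. destruct (cases01 x Hx) as [->|[->|ix]].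
  rewrite N1_0; unfold I01; lra. rewrite N1_1; unfold I01; lra.
  rewrite N1_int by auto. apply psi_I01. Qed.

Lemma N1_dec : strictly_decreasing01 N1.
Proof. intros x y Hx Hy h.
  destruct (cases01 x Hx) as [->|[->|ix]]; destruct (cases01 y Hy) as [->|[->|iy]]; try lra.
  - rewrite N1_0, N1_1; lra.
  - rewrite N1_0, N1_int by auto. apply psi_lt1.
  - rewrite N1_1, N1_int by auto. apply psi_pos.
  - rewrite !N1_int by auto. apply psi_lt. pose proof (phi_lt x y ix iy h). lra. Qed.

Lemma N1_onto z : I01 z -> exists y, I01 y /\ N1 y = z.
Proof. intros Hz. destruct (cases01 z Hz) as [->|[->|iz]].
  - exists 1. split. unfold I01; lra. apply N1_1.
  - exists 0. split. unfold I01; lra. apply N1_0.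
  - exists (psi (- phi z)). split. apply psi_I01.
    rewrite N1_int by (split; [apply psi_pos|apply psi_lt1]). rewrite phi_psi, Ropp_involutive.
    apply psi_phi; auto. Qed.

Lemma anti_of_strict N : strictly_decreasing01 N -> forall x y, I01 x -> I01 y -> x <= y -> N y <= N x.
Proof. intros H x y Hx Hy h. destruct (Req_dec x y). subst; lra. left. apply H; auto; lra. Qed.

Lemma N1_props : fuzzy_negation N1 /\ continuous01 N1 /\ strictly_decreasing01 N1.
Proof. split. split. apply N1_I01. split. apply anti_of_strict, N1_dec. split. apply N1_0. apply N1_1.
  split. apply decr_cont. apply N1_I01. apply N1_dec. apply N1_onto. apply N1_dec. Qed.

Lemma N2_eq x : I01 x -> N2 x = U1 (u 1) (N1 x).
Proof. intros Hx. pose proof (N1_I01 x Hx). rewrite cut_eq by auto. unfold N2, fpow.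
  destruct Req_EM_T as [e|e]. rewrite e; ring.
  simpl. replace (2 * 1) with (INR 2) by (simpl; ring). rewrite Rpower_pow. auto.
  unfold I01 in H. destruct H as [[h|h] _]; auto. congruence. Qed.

Lemma N2_props : fuzzy_negation N2 /\ continuous01 N2 /\ strictly_decreasing01 N2.
Proof. pose proof (u_int 1).
  assert (R : forall x, I01 x -> I01 (N2 x)).
  { intros. rewrite N2_eq by auto. apply U1_I01. unfold I01; lra. apply N1_I01; auto. }
  assert (D : strictly_decreasing01 N2).
  { intros x y Hx Hy h. rewrite !N2_eq by auto. apply cut_incr; try apply N1_I01; auto.
    apply N1_dec; auto. }
  split. split. auto. split. apply anti_of_strict; auto.
  split. unfold N2; rewrite N1_0; ring. unfold N2; rewrite N1_1; ring.
  split; auto. apply decr_cont; auto.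
  intros z Hz. destruct (cut_onto 1 z Hz) as [w [Hw e]]. destruct (N1_onto w Hw) as [x [Hx e']].
  exists x. split; auto. rewrite N2_eq, e'; auto. Qed.

Lemma U2_eq x y : U2 x y = U1 (u (-1)) (U1 x y).
Proof. unfold U2. rewrite <- um1_val. auto. Qed.

Lemma Ic : I01 (u (-1)). Proof. pose proof (u_int (-1)); unfold I01; lra. Qed.
Lemma Id : I01 (u 1). Proof. pose proof (u_int 1); unfold I01; lra. Qed.

Lemma cd : U1 (u (-1)) (u 1) = u 0.
Proof. rewrite U1_uu. auto. Qed.

Lemma swap_c x w : I01 x -> I01 w -> U1 x (U1 (u (-1)) w) = U1 (u (-1)) (U1 x w).
Proof. intros. pose proof Ic. rewrite U1_assoc, (U1_comm x), <- U1_assoc; auto. Qed.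

Lemma U2_uninorm : is_uninorm U2 (1/4) /\ disjunctive U2.
Proof. pose proof Ic as Ic. pose proof Id as Id. rewrite <- u1_val. split.
  split. auto. split. intros; rewrite U2_eq; apply U1_I01; auto; apply U1_I01; auto.
  split. intros x y ? ?; rewrite !U2_eq, (U1_comm x y); auto.
  split. intros x y z Hx Hy Hz. rewrite !U2_eq. rewrite (swap_c x (U1 y z)); auto. 2: apply U1_I01; auto.
    rewrite (U1_comm (U1 (u (-1)) (U1 x y)) z), (swap_c z (U1 x y)), (U1_comm z); auto; try (apply U1_I01; auto).
    rewrite (U1_assoc x y z); auto. apply U1_I01; auto.
  split. intros. rewrite !U2_eq. apply U1_mono; auto; try lra; try (apply U1_I01; auto).
    apply U1_mono; auto.
  intros x Hx. assert (U2 (u 1) x = x).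
  { rewrite U2_eq, U1_assoc, cd, U1_neutral; auto. }
  split; auto. rewrite U2_eq, (U1_comm x (u 1)), <- U2_eq; auto.
  unfold disjunctive. rewrite U2_eq, U1_1l, U1_1r; auto. all: unfold I01; lra. Qed.

Lemma final x y : I01 x -> I01 y -> U2 (N2 x) y = U1 (N1 x) y.
Proof. intros Hx Hy. pose proof Ic. pose proof Id. pose proof (N1_I01 x Hx).
  rewrite U2_eq, N2_eq by auto. rewrite <- U1_assoc, U1_assoc, cd, U1_neutral; auto;
  try (apply U1_I01; auto). Qed.

Theorem mainTheorem8 :
  (forall x, 0 < x < 1 -> exists! n : Z, u (n + 1) < x <= u n) /\
  (is_uninorm U1 (1 / 2) /\ disjunctive U1) /\
  (forall n : Z,
     (forall y, I01 y -> U1 (u n) y = fpow n y) /\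
     continuous01 (fun y => U1 (u n) y) /\
     strictly_increasing01 (fun y => U1 (u n) y) /\
     (forall z, I01 z -> exists y, I01 y /\ U1 (u n) y = z)) /\
  ~ has_continuous_underlying U1 (1 / 2) /\
  (fuzzy_negation N1 /\ continuous01 N1 /\ strictly_decreasing01 N1) /\
  (fuzzy_negation N2 /\ continuous01 N2 /\ strictly_decreasing01 N2) /\
  (is_uninorm U2 (1 / 4) /\ disjunctive U2) /\
  (forall x y, I01 x -> I01 y -> U2 (N2 x) y = U1 (N1 x) y).
Proof.
  split. { intros x Hx. exists (- J (phi x))%Z. split. apply u_range_iff; auto.
    intros n h. symmetry. apply (u_range_iff n x Hx); auto. }
  split. split. apply U1_uninorm. apply U1_disj.
  split. apply partb.
  split. apply partc.
  split. apply N1_props.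
  split. apply N2_props.
  split. apply U2_uninorm.
  apply final.
Qed.
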